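(* Suppose that $X$ is a metric space containing at most $k$ pairwise disjoint cones, that is, $|I|\le k$ for every family $(C(x_i,y_i))_{i\in I}$ of pairwise disjoint cones in $X$. Then $\mathrm{rk}(A)\le\frac12 k$ for all $A\in\mathscr A(X)$.
   Context: $I(x,y)=\{v: d(x,v)+d(v,y)=d(x,y)\}$, $C(x,v)=\{y\in X: v\in I(x,y)\}$. For $f\colon X\to\mathbb R$, $A(f)$ is the set of unordered pairs $\{x,y\}$ ($x=y$ allowed) with $f(x)+f(y)=d(x,y)$; $\Delta(X)=\{f: f(x)+f(y)\ge d(x,y)\ \forall x,y\}$; $\mathscr A(X)=\{A(f): f\in\Delta(X),\ \bigcup A(f)=X\}$. For $A\in\mathscr A(X)$, $\mathrm{rk}(A)$ is the dimension of the affine space $H(A)=\{g\in\mathbb R^X: g(x)+g(y)=d(x,y)\ \forall\{x,y\}\in A\}$. *)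

(* Defs.v *)
From Stdlib Require Import Reals.
From mathcomp Require Import all_boot all_order all_algebra.
From mathcomp Require Import Rstruct.
Set Implicit Arguments. Unset Strict Implicit. Unset Printing Implicit Defensive.
Import Order.TTheory GRing.Theory Num.Theory.
Local Open Scope ring_scope.

Definition is_metric (X : Type) (d : X -> X -> R) : Prop :=
  [/\ forall x, d x x = 0,
      forall x y, d x y = 0 -> x = y,
      forall x y, d x y = d y x
    & forall x y z, d x z <= d x y + d y z].

Definition interval_I (X : Type) (d : X -> X -> R) (x y : X) : X -> Prop :=
  fun v => d x v + d v y = d x y.

Definition cone (X : Type) (d : X -> X -> R) (x v : X) : X -> Prop :=
  fun y => interval_I d x y v.

Definition at_most_k_disjoint_cones (X : Type) (d : X -> X -> R) (k : nat) : Prop :=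
  forall (n : nat) (xs ys : 'I_n -> X),
    (forall i j : 'I_n, i != j -> forall z, ~ (cone d (xs i) (ys i) z /\ cone d (xs j) (ys j) z)) ->
    (n <= k)%N.

(* A(f), as a symmetric relation: {x,y} \in A(f) iff f x + f y = d x y *)
Definition Aset (X : Type) (d : X -> X -> R) (f : X -> R) : X -> X -> Prop :=
  fun x y => f x + f y = d x y.

Definition Delta (X : Type) (d : X -> X -> R) (f : X -> R) : Prop :=
  forall x y, d x y <= f x + f y.

Definition scrA (X : Type) (d : X -> X -> R) (A : X -> X -> Prop) : Prop :=
  exists f : X -> R, [/\ Delta d f, (forall x, exists y, Aset d f x y) & A = Aset d f].

Definition H (X : Type) (d : X -> X -> R) (A : X -> X -> Prop) : (X -> R) -> Prop :=
  fun g => forall x y, A x y -> g x + g y = d x y.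

Definition lin_indep (X : Type) (m : nat) (v : 'I_m -> X -> R) : Prop :=
  forall c : 'I_m -> R, (forall x, \sum_(i < m) c i * v i x = 0) -> forall i, c i = 0.

(* the affine space S (subset of R^X) has dimension <= r : every affinely
   independent family g_0,...,g_m of points of S has m <= r *)
Definition affdim_le (X : Type) (S : (X -> R) -> Prop) (r : R) : Prop :=
  forall (m : nat) (g : 'I_m.+1 -> X -> R),
    (forall i, S (g i)) ->
    lin_indep (fun (i : 'I_m) (x : X) => g (lift ord0 i) x - g ord0 x) ->
    (m%:R : R) <= r.

Definition rk_le (X : Type) (d : X -> X -> R) (A : X -> X -> Prop) (r : R) : Prop :=
  affdim_le (H d A) r.

(* Main.v *)
Require Import Defs.
From Stdlib Require Import Reals.
From mathcomp Require Import all_boot all_order all_algebra.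
From mathcomp Require Import Rstruct.
From mathcomp Require Import ring lra zify.
From Stdlib Require Import ClassicalEpsilon Classical.
Set Implicit Arguments. Unset Strict Implicit.
Import Order.TTheory GRing.Theory Num.Theory.
Local Open Scope ring_scope.

Definition indepn (X : Type) (m : nat) (h : nat -> X -> R) :=
  forall c : nat -> R, (forall x, \sum_(i < m) c i * h i x = 0) ->
    forall i, (i < m)%N -> c i = 0.

Definition good (X : Type) (m : nat) (h : nat -> X -> R) (p : nat -> X) :=
  forall j l, (j < m)%N -> (l < m)%N ->
    ~ (forall i, (i < m)%N -> h i (p j) + h i (p l) = 0) /\
    (j <> l -> ~ (forall i, (i < m)%N -> h i (p j) = h i (p l))).

Lemma nonzero_pt (X : Type) m (h : nat -> X -> R) :
  indepn m.+1 h -> exists q, h m q <> 0.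
Proof.
move=> Hi; apply: NNPP => Hn.
have H0 : forall x, h m x = 0.
  by move=> x; apply: NNPP => H; apply: Hn; exists x.
have := Hi (fun i => (i == m)%:R).
move=> /(_ _ m (ltnSn m)); rewrite eqxx => H1.
have: (1 : R) = 0.
  apply: H1 => x; rewrite big_ord_recr /= eqxx H0 mulr0 addr0.
  by apply: big1 => i _; rewrite (ltn_eqF (ltn_ord i)) mul0r.
by move/eqP; rewrite oner_eq0.
Qed.

Lemma aux_sum (a1 a2 b1 b2 : R) : a2 != 0 -> a1 + b1 = 0 -> a2 + b2 = 0 ->
  b1 - a1 / a2 * b2 = 0.
Proof.
move=> ha e1 e2.
have -> : b1 = - a1 by lra.
have -> : b2 = - a2 by lra.
by field.
Qed.

Lemma aux_eq (a1 a2 b1 b2 : R) : a2 != 0 -> a1 = b1 -> a2 = b2 ->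
  b1 - a1 / a2 * b2 = 0.
Proof. by move=> ha <- <-; field. Qed.

Lemma select (X : Type) m : forall (h : nat -> X -> R), X -> indepn m h ->
  exists p, good m h p.
Proof.
elim: m => [|m IH] h x0 Hi.
  by exists (fun _ => x0) => j l.
have [q Hq] := nonzero_pt Hi.
have Hq' : h m q != 0 by apply/eqP.
pose h' i x := h i x - h i q / h m q * h m x.
have Hi' : indepn m h'.
  move=> c Hc.
  pose c' i := if (i < m)%N then c i else - \sum_(i < m) c i * (h i q / h m q).
  have Hc' : forall x, \sum_(i < m.+1) c' i * h i x = 0.
    move=> x; rewrite big_ord_recr /= /c' ltnn.
    rewrite (eq_bigr (fun i : 'I_m => c i * h i x)); last first.
      by move=> i _; rewrite ltn_ord.
    rewrite -[RHS](Hc x) mulNr big_distrl /= -sumrB; apply: eq_bigr => i _.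
    by rewrite /h'; ring.
  move=> i Him; have := Hi c' Hc' i (ltnW Him).
  by rewrite /c' Him.
have [p Hp] := IH h' q Hi'.
exists (fun i => if i == m then q else p i) => j l Hj Hl.
have h'q : forall i, h' i q = 0 by move=> i; rewrite /h'; apply: aux_eq.
case: (eqVneq j m) => [->|Hjm]; case: (eqVneq l m) => [->|Hlm]; rewrite /=.
- split; last by move=> /(_ erefl).
  move=> H; have := H m (ltnSn m) => e.
  by apply: Hq; lra.
- have Hl' : (l < m)%N by lia.
  have [P1 _] := Hp l l Hl' Hl'.
  split.
  + move=> H; apply: P1 => i Hi0.
    rewrite /h' (aux_sum Hq' (H i (ltnW Hi0)) (H m (ltnSn m))); lra.
  + move=> _ H; apply: P1 => i Hi0.
    have e1 := H i (ltnW Hi0); have e2 := H m (ltnSn m).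
    have : h' i (p l) = 0 by rewrite -(h'q i) /h' -e1 -e2.
    move=> ->; lra.
- have Hj' : (j < m)%N by lia.
  have [P1 _] := Hp j j Hj' Hj'.
  split.
  + move=> H; apply: P1 => i Hi0.
    have e1 := H i (ltnW Hi0); have e2 := H m (ltnSn m).
    rewrite addrC in e1; rewrite addrC in e2.
    rewrite /h' (aux_sum Hq' e1 e2); lra.
  + move=> _ H; apply: P1 => i Hi0.
    have e1 := H i (ltnW Hi0); have e2 := H m (ltnSn m).
    have : h' i (p j) = 0 by rewrite -(h'q i) /h' e1 e2.
    move=> ->; lra.
- have Hj' : (j < m)%N by lia.
  have Hl' : (l < m)%N by lia.
  have [P1 P2] := Hp j l Hj' Hl'.
  split.
  + move=> H; apply: P1 => i Hi0.
    have e1 := H i (ltnW Hi0); have e2 := H m (ltnSn m).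
    have -> : h' i (p j) + h' i (p l) =
       (h i (p j) + h i (p l)) - h i q / h m q * (h m (p j) + h m (p l))
      by rewrite /h'; ring.
    by rewrite e1 e2 mulr0 subr0.
  + move=> Hne H; apply: (P2 Hne) => i Hi0.
    have e1 := H i (ltnW Hi0); have e2 := H m (ltnSn m).
    by rewrite /h' e1 e2.
Qed.

Theorem proposition5p3 (X : Type) (d : X -> X -> R) (k : nat) :
  is_metric d ->
  at_most_k_disjoint_cones d k ->
  forall A : X -> X -> Prop, scrA d A -> rk_le d A (k%:R / 2).
Proof.
move=> [d0 _ dsym dtri] Hk A [f [HD Hcov ->]] m g Hg Hli.
pose hn : nat -> X -> R := fun i x => g (inord i.+1) x - g (inord 0) x.
have HDn : forall i x y, Aset d f x y -> hn i x + hn i y = 0.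
  move=> i x y Hxy; have e1 := Hg (inord i.+1) x y Hxy.
  have e2 := Hg (inord 0) x y Hxy; rewrite /hn; lra.
have Hin : indepn m hn.
  move=> c Hc i Him.
  have := Hli (fun i : 'I_m => c i) _ (Ordinal Him); apply => x.
  rewrite -[RHS](Hc x). apply: eq_bigr => j _; rewrite /hn; congr (_ * (g _ x - g _ x)).
  - by apply: val_inj; rewrite /= inordK // ltnS.
  - by apply: val_inj; rewrite /= inordK.
case: m g Hg Hli hn HDn Hin => [|m] g Hg Hli hn HDn Hin.
  by rewrite mulr0n; apply: divr_ge0 => //; apply: (ler0n _ 2).
have [q _] := nonzero_pt Hin.
have [p Hp] := select q Hin.
pose yf x := proj1_sig (constructive_indefinite_description _ (Hcov x)).
have Hy : forall x, Aset d f x (yf x)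
  by move=> x; exact: (proj2_sig (constructive_indefinite_description _ (Hcov x))).
have Asym : forall a b, Aset d f a b -> Aset d f b a
  by move=> a b; rewrite /Aset addrC dsym.
have Hcone : forall a b z, Aset d f a b -> cone d a b z -> Aset d f a z.
  move=> a b z Hab Hc; rewrite /cone /interval_I in Hc; rewrite /Aset in Hab *.
  have w1 := Hy z; rewrite /Aset in w1.
  have t1 := dtri z b (yf z); have t2 := HD b (yf z); have t3 := HD a z.
  have s := dsym z b; lra.
pose M := m.+1.
pose Xs i := if (i < M)%N then yf (p i) else p (i - M)%N.
pose Ys i := if (i < M)%N then p i else yf (p (i - M)%N).
have Hanc : forall i z t, cone d (Xs i) (Ys i) z -> hn t (Xs i) = - hn t z.
  move=> i z t Hc.
  have HA : Aset d f (Xs i) (Ys i).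
    by rewrite /Xs /Ys; case: ifP => _; [apply: Asym|]; apply: Hy.
  have := HDn t _ _ (Hcone _ _ _ HA Hc); lra.
have Hyf : forall t x, hn t (yf x) = - hn t x.
  move=> t x; have := HDn t _ _ (Hy x); lra.
have := Hk (M + M)%N (fun i => Xs i) (fun i => Ys i).
have key : forall i i' : 'I_(M + M), i != i' ->
  ~ (forall t, (t < M)%N -> hn t (Xs i) = hn t (Xs i')).
  move=> [i Hi] [i' Hi'] /= Hne H.
  have Hne' : i <> i' by move=> e; move: Hne; rewrite -val_eqE /= e eqxx.
  move: H; rewrite /Xs.
  case: (ltnP i M) => Hi1; case: (ltnP i' M) => Hi2 H.
  - have [_ P2] := Hp i i' Hi1 Hi2; apply: (P2 Hne') => t Ht.
    have := H t Ht; rewrite !Hyf; lra.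
  - have [P1 _] := Hp i (i' - M)%N Hi1 ltac:(lia); apply: P1 => t Ht.
    have := H t Ht; rewrite !Hyf; lra.
  - have [P1 _] := Hp (i - M)%N i' ltac:(lia) Hi2; apply: P1 => t Ht.
    have := H t Ht; rewrite !Hyf; lra.
  - have [_ P2] := Hp (i - M)%N (i' - M)%N ltac:(lia) ltac:(lia).
    apply: (P2 ltac:(lia)) => t Ht; exact: H.
move=> H; have {H} Hle : (M + M <= k)%N.
  apply: H => i j Hij z [c1 c2]; apply: (key i j Hij) => t _.
  by rewrite (Hanc _ _ _ c1) (Hanc _ _ _ c2).
rewrite ler_pdivlMr ?ltr0n // (_ : (2:R) = 2%:R) // -natrM ler_nat; lia.
Qed.
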